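(* No randomized online algorithm for online bipartite matching in the random edge arrival model achieves a competitive ratio greater than $\frac{69}{84}$.
   Context: Online bipartite matching in the random edge arrival model: a bipartite graph $G$ with $m$ edges is fixed adversarially; its edges arrive one at a time in a uniformly random order; the algorithm knows $m$ and upon each arrival irrevocably decides whether to add the edge to its matching, which must remain a matching. The competitive ratio of an algorithm is the infimum over graphs of (expected size of its matching over the order and its coins)$/|\textsc{OPT}|$, where $\textsc{OPT}$ is a maximum matching. *)

(* Defs.v *)
From HB Require Import structures.
From mathcomp Require Import all_boot all_order all_algebra.
From mathcomp Require Import reals.
Set Implicit Arguments. Unset Strict Implicit. Unset Printing Implicit Defensive.
Import Order.TTheory GRing.Theory Num.Theory.
Local Open Scope ring_scope.

(* An edge (l, r) of a bipartite graph: l is a left vertex, r a right vertex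
   (vertex names are natural numbers; left and right names live in separate
   name spaces). A graph is a duplicate-free list of its edges. *)
Definition edge := (nat * nat)%type.

(* The history seen by the online algorithm: the edges arrived so far, in
   arrival order, together with the (irrevocable) decision taken on each. *)
Definition history := seq (edge * bool).

(* A randomized online algorithm, given as a behavioural strategy: knowing m
   (number of edges), the history, and the newly arrived edge, it returns the
   probability of adding the new edge to its matching. *)
Definition online_alg (R : realType) := nat -> history -> edge -> R.

Definition valid_alg (R : realType) (A : online_alg R) : Prop :=
  forall m h e, 0 <= A m h e <= 1.

(* The new edge can be added iff no previously accepted edge shares an endpoint
   with it (the matching must remain a matching; an attempt to add an infeasible
   edge is treated as a rejection). *)
Definition can_add (h : history) (e : edge) : bool :=
  all (fun fb => fb.2 ==> ((fb.1.1 != e.1) && (fb.1.2 != e.2))) h.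

Fixpoint run_value (R : realType) (A : online_alg R) (m : nat) (h : history)
    (rest : seq edge) : R :=
  match rest with
  | [::] => 0
  | e :: rest' =>
      let q := if can_add h e then A m h e else 0 in
      q * (1 + run_value A m (rcons h (e, true)) rest')
      + (1 - q) * run_value A m (rcons h (e, false)) rest'
  end.

(* Expected size of A's matching on G when the edges of G arrive in a uniformly
   random order (for uniq G, [permutations G] lists each of the m! orders once). *)
Definition expected_alg (R : realType) (A : online_alg R) (G : seq edge) : R :=
  (\sum_(s <- permutations G) run_value A (size G) [::] s)
    / (size (permutations G))%:R.

Definition matching_in (G M : seq edge) : Prop :=
  [/\ uniq M, {subset M <= G} &
      pairwise (fun e f : edge => (e.1 != f.1) && (e.2 != f.2)) M].

Definition max_matching_size (G : seq edge) (k : nat) : Prop :=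
  (exists M, matching_in G M /\ size M = k) /\
  (forall M, matching_in G M -> (size M <= k)%N).

(* Main.v *)
Require Import Defs.
From HB Require Import structures.
From mathcomp Require Import all_boot all_order all_algebra.
From mathcomp Require Import reals.
From mathcomp Require Import lra.
Import Order.TTheory GRing.Theory Num.Theory.
Local Open Scope nat_scope.

Fixpoint dd (acc : seq edge) (s : seq edge) : seq edge :=
  if s is x :: s' then dd (if x \in acc then acc else x :: acc) s' else acc.

Definition key (s : seq edge) : edge := head (0,0) s.

Fixpoint dpv (n : nat) (h : history) (L : seq (seq edge)) : nat :=
  match n with
  | 0 => 0
  | n'.+1 =>
    sumn (map (fun e =>
      let Le := [seq behead s | s <- L & key s == e] in
      let r := dpv n' (rcons h (e, false)) Le in
      if can_add h e then maxn (size Le + dpv n' (rcons h (e, true)) Le) r else r)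
      (dd [::] (map key L)))
  end.

Definition fam : seq (seq edge) := [::
  [:: (0,0); (0,1); (0,2); (1,0); (1,1); (2,0)];
  [:: (0,0); (0,1); (0,2); (1,0); (1,1); (2,1)];
  [:: (0,0); (0,1); (0,2); (1,0); (1,2); (2,0)];
  [:: (0,0); (0,1); (0,2); (1,0); (1,2); (2,2)];
  [:: (0,0); (0,1); (0,2); (1,0); (2,0); (2,1)];
  [:: (0,0); (0,1); (0,2); (1,0); (2,0); (2,2)];
  [:: (0,0); (0,1); (0,2); (1,1); (1,2); (2,1)];
  [:: (0,0); (0,1); (0,2); (1,1); (1,2); (2,2)];
  [:: (0,0); (0,1); (0,2); (1,1); (2,0); (2,1)];
  [:: (0,0); (0,1); (0,2); (1,1); (2,1); (2,2)];
  [:: (0,0); (0,1); (0,2); (1,2); (2,0); (2,2)];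
  [:: (0,0); (0,1); (0,2); (1,2); (2,1); (2,2)];
  [:: (0,0); (0,1); (1,0); (1,1); (1,2); (2,0)];
  [:: (0,0); (0,1); (1,0); (1,1); (1,2); (2,1)];
  [:: (0,0); (0,1); (1,0); (2,0); (2,1); (2,2)];
  [:: (0,0); (0,1); (1,1); (2,0); (2,1); (2,2)];
  [:: (0,0); (0,2); (1,0); (1,1); (1,2); (2,0)];
  [:: (0,0); (0,2); (1,0); (1,1); (1,2); (2,2)];
  [:: (0,0); (0,2); (1,0); (2,0); (2,1); (2,2)];
  [:: (0,0); (0,2); (1,2); (2,0); (2,1); (2,2)];
  [:: (0,0); (1,0); (1,1); (1,2); (2,0); (2,1)];
  [:: (0,0); (1,0); (1,1); (1,2); (2,0); (2,2)];
  [:: (0,0); (1,0); (1,1); (2,0); (2,1); (2,2)];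
  [:: (0,0); (1,0); (1,2); (2,0); (2,1); (2,2)];
  [:: (0,1); (0,2); (1,0); (1,1); (1,2); (2,1)];
  [:: (0,1); (0,2); (1,0); (1,1); (1,2); (2,2)];
  [:: (0,1); (0,2); (1,1); (2,0); (2,1); (2,2)];
  [:: (0,1); (0,2); (1,2); (2,0); (2,1); (2,2)];
  [:: (0,1); (1,0); (1,1); (1,2); (2,0); (2,1)];
  [:: (0,1); (1,0); (1,1); (1,2); (2,1); (2,2)];
  [:: (0,1); (1,0); (1,1); (2,0); (2,1); (2,2)];
  [:: (0,1); (1,1); (1,2); (2,0); (2,1); (2,2)];
  [:: (0,2); (1,0); (1,1); (1,2); (2,0); (2,2)];
  [:: (0,2); (1,0); (1,1); (1,2); (2,1); (2,2)];
  [:: (0,2); (1,0); (1,2); (2,0); (2,1); (2,2)];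
  [:: (0,2); (1,1); (1,2); (2,0); (2,1); (2,2)]
].

Definition LL := flatten (map (@permutations _) fam).

Lemma dpv_LL : dpv 6 [::] LL <= 504 * 120.
Proof. vm_compute. reflexivity. Qed.

Definition matchb (S : seq edge) :=
  pairwise (fun e f : edge => (e.1 != f.1) && (e.2 != f.2)) S.

Fixpoint subs (s : seq edge) : seq (seq edge) :=
  if s is x :: s' then let t := subs s' in map (cons x) t ++ t else [:: [::]].

Definition wit (G : seq edge) : seq edge :=
  nth [::] [seq S <- subs G | matchb S && (size S == 3)] 0.

Definition famok (G : seq edge) : bool :=
  [&& uniq G, size G == 6, size (permutations G) == 720,
      all (fun e : edge => e.1 < 3) G &
      let M := wit G in [&& matchb M, size M == 3, all (fun x => x \in G) M & uniq M]].

Lemma all_famok : all famok fam.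
Proof. vm_compute. reflexivity. Qed.

Lemma size_fam : size fam = 36.
Proof. reflexivity. Qed.

Lemma dd_mem acc s x : (x \in dd acc s) = (x \in acc) || (x \in s).
Proof.
elim: s acc => [|y s IH] acc /=; first by rewrite orbF.
rewrite IH in_cons; case: ifP => yA; last by rewrite in_cons; case: (x == y); rewrite ?orbT.
case: (eqVneq x y) => [->|]; by rewrite ?yA.
Qed.

Lemma dd_uniq acc s : uniq acc -> uniq (dd acc s).
Proof.
elim: s acc => [|y s IH] acc //= uA; apply: IH; case: ifP => //= ->; by [].
Qed.

Lemma pw_uniq (M : seq edge) : matchb M -> uniq (map fst M).
Proof.
rewrite /matchb; elim: M => //= e M IH /andP[Hall Hpw]; rewrite IH // andbT.
apply/mapP => -[f fM ef]; move/allP: Hall => /(_ f fM) /andP[/eqP]; by [].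
Qed.

Local Open Scope ring_scope.

Lemma sum_part (R : realType) (F : seq edge -> R) (L : seq (seq edge)) (U : seq edge) :
  uniq U -> (forall s, s \in L -> key s \in U) ->
  \sum_(s <- L) F s = \sum_(e <- U) \sum_(s <- L | key s == e) F s.
Proof.
move=> uU; elim: L => [|s L IH] HL.
  by rewrite big_nil big1 // => e _; rewrite big_nil.
rewrite big_cons IH; last by move=> t tL; apply: HL; rewrite in_cons tL orbT.
rewrite [X in _ = X](eq_bigr (fun e => (if key s == e then F s else 0) + \sum_(t <- L | key t == e) F t)); last first.
  by move=> e _; rewrite big_cons; case: ifP => _ //; rewrite add0r.
rewrite big_split /=; congr (_ + _); apply/esym.
rewrite (bigD1_seq (key s)) //=; last by apply: HL; rewrite in_cons eqxx.
rewrite eqxx big1 ?addr0 // => e /negPf; by rewrite eq_sym => ->.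
Qed.

Lemma sum_one (R : realType) (T : Type) (L : seq T) : \sum_(t <- L) (1 : R) = (size L)%:R.
Proof.
elim: L => [|x l IH]; first by rewrite big_nil.
by rewrite big_cons IH /= -addn1 natrD addrC.
Qed.

Lemma sum_constR (R : realType) (T : Type) (L : seq T) (c : R) :
  \sum_(t <- L) c = (size L)%:R * c.
Proof. by rewrite -sum_one mulr_suml; apply: eq_bigr => t _; rewrite mul1r. Qed.

Lemma dpv_bound (R : realType) (A : online_alg R) (m n : nat) (h : history)
   (L : seq (seq edge)) :
  valid_alg A -> all (fun s => size s == n) L ->
  \sum_(s <- L) run_value A m h s <= (dpv n h L)%:R.
Proof.
move=> vA; elim: n h L => [|n IH] h L hL.
  rewrite /= big_seq big1 // => s /(allP hL); rewrite size_eq0 => /eqP -> //.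
rewrite (@sum_part R _ L (dd [::] (map key L))); last 2 first.
- by apply: dd_uniq.
- by move=> s sL; rewrite dd_mem; apply/orP; right; apply: map_f.
rewrite /= sumnE natr_sum big_map; apply: ler_sum => e _.
set Le := [seq behead s | s <- L & key s == e].
have hLe : all (fun s => size s == n) Le.
  apply/allP => t /mapP [s]; rewrite mem_filter => /andP [_ sL] ->.
  by move/allP: hL => /(_ s sL); rewrite size_behead => /eqP ->.
have -> : \sum_(s <- L | key s == e) run_value A m h s =
          \sum_(t <- Le) run_value A m h (e :: t).
  rewrite big_map big_filter [LHS]big_seq_cond [RHS]big_seq_cond; apply: eq_bigr => s /andP [sL /eqP ks].
  move/allP: hL => /(_ s sL); case: s sL ks => // x t _ /= -> _ //.
set q := (if can_add h e then A m h e else 0).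
have -> : \sum_(t <- Le) run_value A m h (e :: t) =
   q * ((size Le)%:R + \sum_(t <- Le) run_value A m (rcons h (e, true)) t)
   + (1 - q) * \sum_(t <- Le) run_value A m (rcons h (e, false)) t.
  rewrite -sum_one -big_split /= !mulr_sumr -big_split /=.
  by apply: eq_bigr => t _.
have HT := IH (rcons h (e, true)) Le hLe.
have HF := IH (rcons h (e, false)) Le hLe.
move: HT HF; set XT := \sum_(t <- Le) _; set XF := \sum_(t <- Le) _.
move=> HT HF.
rewrite /q; case: (can_add h e) => /=; last by rewrite mul0r add0r subr0 mul1r.
have /andP [q0 q1] := vA m h e.
set a := (size Le + dpv n (rcons h (e, true)) Le)%N.
set b := dpv n (rcons h (e, false)) Le.
have Ha : (size Le)%:R + XT <= a%:R :> R by rewrite /a natrD lerD2l.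
have [Hab|Hab] := leqP a b.
- idtac.
  have Hab' : a%:R <= b%:R :> R by rewrite ler_nat.
  have h1 : 0 <= A m h e * (b%:R - ((size Le)%:R + XT)) by apply: mulr_ge0; lra.
  have h2 : 0 <= (1 - A m h e) * (b%:R - XF) by apply: mulr_ge0; lra.
  lra.
- idtac.
  have Hab' : b%:R <= a%:R :> R by rewrite ler_nat ltnW.
  have h1 : 0 <= A m h e * (a%:R - ((size Le)%:R + XT)) by apply: mulr_ge0; lra.
  have h2 : 0 <= (1 - A m h e) * (a%:R - XF) by apply: mulr_ge0; lra.
  lra.
Qed.

Theorem lemma12 (R : realType) (A : online_alg R) :
  valid_alg A ->
  forall eps : R, 0 < eps ->
  exists (G : seq edge) (k : nat),
    [/\ uniq G, (0 < k)%N, max_matching_size G k &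
        expected_alg A G < (69 / 84 + eps) * k%:R].
Proof.
move=> vA eps eps0.
have Hok := allP all_famok.
case: (boolP (has (fun G => expected_alg A G < (69 / 84 + eps) * 3%:R) fam)).
  move=> /hasP [G GF HG]; exists G, 3%N.
  have := Hok G GF; case/and5P => uG _ _ /allP H3 /and4P [mM sM aM uM].
  split => //.
  split.
    exists (wit G); split; last by apply/eqP.
    split => //.
    by move=> x xM; move/allP: aM => /(_ x xM).
  move=> M [uM' sM' pM'].
  have -> : size M = size (map fst M) by rewrite size_map.
  have -> : 3%N = size [:: 0%N; 1%N; 2%N] by [].
  apply: uniq_leq_size; first by apply: pw_uniq.
  move=> x /mapP [f fM ->]; have := H3 f (sM' f fM).
  by case: f fM => [[|[|[|y]]] z].
move=> Hn; exfalso.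
have Hall : forall G, G \in fam -> (69 / 84 + eps) * 3%:R <= expected_alg A G.
  by move=> G GF; move/hasPn: Hn => /(_ G GF); rewrite -leNgt.
have Hsum : \sum_(G <- fam) (expected_alg A G * 720%:R) <= (504 * 120)%:R.
  have HLL : all (fun s => size s == 6%N) LL.
    apply/allP => s; rewrite /LL => /flattenP [p /mapP [G GF ->]].
    rewrite mem_permutations => /perm_size ->.
    by have := Hok G GF; case/and5P.
  have Hb := @dpv_bound R A 6 6 [::] LL vA HLL.
  have Hd : (dpv 6 [::] LL)%:R <= (504 * 120)%:R :> R by rewrite ler_nat dpv_LL.
  apply: le_trans Hd; apply: le_trans Hb.
  rewrite /LL big_flatten big_map le_eqVlt; apply/orP; left; apply/eqP.
  apply: eq_big_seq => G GF.
  have := Hok G GF; case/and5P => _ /eqP sG /eqP sP _ _.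
  rewrite /expected_alg sP sG mulrVK //.
  by rewrite unitfE pnatr_eq0.
have Hlow : \sum_(G <- fam) ((69 / 84 + eps) * 3%:R * 720%:R) <=
            \sum_(G <- fam) (expected_alg A G * 720%:R).
  rewrite big_seq [X in _ <= X]big_seq; apply: ler_sum => G GF.
  by rewrite ler_pM2r ?ltr0n // Hall.
have := le_trans Hlow Hsum.
rewrite sum_constR size_fam.
rewrite !natrM.
lra.
Qed.
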